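(* Let $\mathcal{A}=(\mathcal{T},c)$ be a DPA with $\mathcal{T}=(\Sigma,Q,\delta,q_0)$, let $\mathcal{D}$ be a DPA with $D:=L(\mathcal{D})$, let $\mathcal{T}'=(\Sigma,Q',\delta',q_0')$ be a deterministic transition system and $h:\mathcal{T}\to\mathcal{T}'$ a surjective homomorphism. Define $\mathcal{F}_0'=\{R'\subseteq Q'\mid \exists\alpha\in L(\mathcal{A})\setminus D: h(\mathrm{Inf}_{\mathcal{A}}(\alpha))=R'\}$ and $\mathcal{F}_1'=\{R'\subseteq Q'\mid \exists\alpha\in (\Sigma^\omega\setminus L(\mathcal{A}))\setminus D: h(\mathrm{Inf}_{\mathcal{A}}(\alpha))=R'\}$, where $h(P)=\{h(q)\mid q\in P\}$. Then for every priority function $c':Q'\to\mathbb{N}$: $L(\mathcal{T}',c')\equiv_D L(\mathcal{T},c)$ if and only if $c'$ is consistent with $(\mathcal{F}_0',\mathcal{F}_1')$, i.e., $\max c'(R')$ is even for all $R'\in\mathcal{F}_0'$ and odd for all $R'\in\mathcal{F}_1'$.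
   Context: A deterministic transition system is $\mathcal{T}=(\Sigma,Q,\delta,q_0)$ with finite alphabet, finite state set, transition function $\delta:Q\times\Sigma\to Q$, initial state $q_0$, all states reachable. $\mathrm{Inf}_{\mathcal{T}}(\alpha)$ (or $\mathrm{Inf}_{\mathcal{A}}(\alpha)$) is the set of states visited infinitely often by the run of $\alpha\in\Sigma^\omega$ from $q_0$. A DPA $(\mathcal{T},c)$ with $c:Q\to\mathbb{N}$ accepts those $\alpha$ for which $\max c(\mathrm{Inf}_{\mathcal{T}}(\alpha))$ is even, where $c(P)=\{c(p)\mid p\in P\}$. A homomorphism $h:\mathcal{T}\to\mathcal{T}'$ is a map $h:Q\to Q'$ with $h(q_0)=q_0'$ and $h(\delta(q,a))=\delta'(h(q),a)$. $L\equiv_D L'$ means $L\setminus D=L'\setminus D$. *)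

(* Defs.v *)
From mathcomp Require Import all_boot all_order.
From mathcomp Require Import boolp.
Set Implicit Arguments. Unset Strict Implicit. Unset Printing Implicit Defensive.

Record TS (Sigma Q : finType) := mkTS { delta : Q -> Sigma -> Q; q0 : Q }.

Definition run_fin (Sigma Q : finType) (T : TS Sigma Q) (w : seq Sigma) : Q :=
  foldl (delta T) (q0 T) w.

Definition all_reachable (Sigma Q : finType) (T : TS Sigma Q) : Prop :=
  forall q : Q, exists w : seq Sigma, run_fin T w = q.

Definition word (Sigma : Type) := nat -> Sigma.

Fixpoint run (Sigma Q : finType) (T : TS Sigma Q) (alpha : word Sigma) (n : nat) : Q :=
  match n with
  | 0 => q0 T
  | n'.+1 => delta T (run T alpha n') (alpha n')
  end.

Definition Inf (Sigma Q : finType) (T : TS Sigma Q) (alpha : word Sigma) : {set Q} :=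
  [set q | `[< forall N, exists n, (N <= n)%N /\ run T alpha n = q >]].

(* max c(P) (P nonempty in all uses) *)
Definition maxc (Q : finType) (c : Q -> nat) (P : {set Q}) : nat := \max_(q in P) c q.

Definition L (Sigma Q : finType) (T : TS Sigma Q) (c : Q -> nat) (alpha : word Sigma) : Prop :=
  ~~ odd (maxc c (Inf T alpha)).

Definition is_hom (Sigma Q Q' : finType) (T : TS Sigma Q) (T' : TS Sigma Q') (h : Q -> Q') : Prop :=
  h (q0 T) = q0 T' /\ forall q a, h (delta T q a) = delta T' (h q) a.

Definition equiv_mod (Sigma : Type) (L1 L2 D : word Sigma -> Prop) : Prop :=
  forall alpha, ~ D alpha -> (L1 alpha <-> L2 alpha).

Definition F0 (Sigma Q Q' : finType) (T : TS Sigma Q) (c : Q -> nat) (D : word Sigma -> Prop)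
  (h : Q -> Q') (R' : {set Q'}) : Prop :=
  exists alpha, L T c alpha /\ ~ D alpha /\ h @: Inf T alpha = R'.
Definition F1 (Sigma Q Q' : finType) (T : TS Sigma Q) (c : Q -> nat) (D : word Sigma -> Prop)
  (h : Q -> Q') (R' : {set Q'}) : Prop :=
  exists alpha, ~ L T c alpha /\ ~ D alpha /\ h @: Inf T alpha = R'.

Definition consistent (Q' : finType) (c' : Q' -> nat) (F0' F1' : {set Q'} -> Prop) : Prop :=
  (forall R', F0' R' -> ~~ odd (maxc c' R')) /\ (forall R', F1' R' -> odd (maxc c' R')).

Definition surj (A B : Type) (f : A -> B) : Prop := forall b, exists a, f a = b.

(* Main.v *)
Require Import Defs.
From mathcomp Require Import all_boot all_order.
From mathcomp Require Import boolp.

Lemma inf_pigeon (Q : finType) (f : nat -> Q) (P : Q -> Prop) :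
  (forall N, exists n, N <= n /\ P (f n)) ->
  exists q, P q /\ forall N, exists n, N <= n /\ f n = q.
Proof.
move=> H; apply: contrapT => Hn.
have H1 : forall q : Q, exists N, forall n, N <= n -> P q -> f n <> q.
  move=> q; case: (pselect (forall N, exists n, N <= n /\ f n = q)) => Hq.
  - exists 0 => n _ Pq; exfalso; apply: Hn; exists q; split => //.
  - move/existsNP: Hq => [N HN]; exists N => n Nn Pq fnq; apply: HN; exists n; split => //.
have [g Hg] := choice H1.
have [n [Nn Pn]] := H (\max_(q : Q) g q)%N.
apply: (Hg (f n) n) => //.
exact: leq_trans (leq_bigmax (f n)) Nn.
Qed.

Lemma run_hom {Sigma Q Q' : finType} {T : TS Sigma Q} {T' : TS Sigma Q'} {h} alpha :
  is_hom T T' h -> forall n, run T' alpha n = h (run T alpha n).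
Proof.
move=> [h0 hd]; elim=> [|n IH] /=; first by rewrite h0.
by rewrite hd IH.
Qed.

Lemma Inf_hom {Sigma Q Q' : finType} {T : TS Sigma Q} {T' : TS Sigma Q'} {h} alpha :
  is_hom T T' h -> Inf T' alpha = h @: Inf T alpha.
Proof.
move=> Hh; apply/setP => q'; rewrite inE.
apply/asboolP/imsetP.
- move=> Hi.
  have [q [hq Hq]] := @inf_pigeon _ (run T alpha) (fun q => h q = q')
     (fun N => let: ex_intro n (conj a b) := Hi N in
       ex_intro _ n (conj a (etrans (esym (run_hom alpha Hh n)) b))).
  by exists q; [rewrite inE; apply/asboolP|].
- move=> [q]; rewrite inE => /asboolP Hq -> N.
  have [n [Nn E]] := Hq N; exists n; split => //.
  by rewrite (run_hom alpha Hh) E.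
Qed.

Theorem lemma1 (Sigma Q QD Q' : finType)
  (T : TS Sigma Q) (c : Q -> nat)
  (TD : TS Sigma QD) (cD : QD -> nat)
  (T' : TS Sigma Q') (h : Q -> Q') :
  all_reachable T -> all_reachable TD -> all_reachable T' ->
  is_hom T T' h -> surj h ->
  forall c' : Q' -> nat,
    equiv_mod (L T' c') (L T c) (L TD cD) <->
    consistent c' (F0 T c (L TD cD) h) (F1 T c (L TD cD) h).
Proof.
move=> _ _ _ Hh _ c'; split.
- move=> Heq; split.
  + move=> R' [alpha [La [nD <-]]].
    have := (proj2 (Heq alpha nD) La).
    by rewrite /L (Inf_hom alpha Hh).
  + move=> R' [alpha [La [nD <-]]].
    apply/negPn/negP => Hc; apply: La; apply: (proj1 (Heq alpha nD)).
    by rewrite /L (Inf_hom alpha Hh).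
- move=> [H0 H1] alpha nD; rewrite /L (Inf_hom alpha Hh).
  case: (pselect (L T c alpha)) => La.
  + split => // _; exact: (H0 _ (ex_intro _ alpha (conj La (conj nD erefl)))).
  + have := H1 _ (ex_intro _ alpha (conj La (conj nD erefl))).
    move=> Ho; split => [Hn|Hn]; [by rewrite Ho in Hn| by exfalso; apply: La].
Qed.
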